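(* Let $\mathcal A$ be a $C^*$-algebra with identity $1$, $\delta\colon\mathcal A\to\mathcal A$ a $^*$-endomorphism, and $\delta_*$ a complete transfer operator for $(\mathcal A,\delta)$. Suppose $\delta(1)$ lies in the center of $\mathcal A$. Then 1) both triples $(\delta,\ \delta_*(1)\mathcal A,\ \delta(1)\mathcal A)$ and $(\delta_*,\ \delta(1)\mathcal A,\ \delta_*(1)\mathcal A)$ are partial automorphisms of $\mathcal A$ (with $\delta,\delta_*$ restricted to the respective first ideals), and they are inverse to each other; 2) $\delta_*\colon\mathcal A\to\mathcal A$ is an endomorphism.
   Context: A transfer operator for $(\mathcal A,\delta)$ is a continuous positive linear map $\delta_*\colon\mathcal A\to\mathcal A$ such that $\delta_*(\delta(a)b)=a\,\delta_*(b)$ for all $a,b\in\mathcal A$; it is complete if $\delta(\delta_*(a))=\delta(1)a\delta(1)$ for all $a\in\mathcal A$. A partial automorphism of $\mathcal A$ is a triple $(\theta,I,J)$ where $I,J$ are closed two-sided ideals of $\mathcal A$ and $\theta\colon I\to J$ is a $^*$-isomorphism. *)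

(* Defs.v *)
From HB Require Import structures.
From mathcomp Require Import all_boot all_order all_algebra.
From mathcomp Require Import reals.
From mathcomp Require Import complex.
Set Implicit Arguments. Unset Strict Implicit. Unset Printing Implicit Defensive.
Import Order.TTheory GRing.Theory Num.Theory.
Local Open Scope ring_scope.

Section Cstar.
Variable R : realType.
Local Notation C := (R[i]).
Variables (A : algType C) (star : A -> A) (nrm : A -> R).

Definition is_unital_Cstar_algebra : Prop :=
  (forall a, star (star a) = a) /\
  (forall a b, star (a + b) = star a + star b) /\
  (forall (c : C) a, star (c *: a) = (c^*)%C *: star a) /\
  (forall a b, star (a * b) = star b * star a) /\
  (forall a, 0 <= nrm a) /\
  (forall a, nrm a = 0 -> a = 0) /\
  (forall a b, nrm (a + b) <= nrm a + nrm b) /\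
  (forall (c : C) a, nrm (c *: a) = Normc.normc c * nrm a) /\
  (forall a b, nrm (a * b) <= nrm a * nrm b) /\
  (forall a, nrm (star a * a) = nrm a ^+ 2) /\
  (forall u : nat -> A,
    (forall e : R, 0 < e -> exists N, forall m n, (N <= m)%N -> (N <= n)%N ->
        nrm (u m - u n) < e) ->
    exists l, forall e : R, 0 < e -> exists N, forall n, (N <= n)%N ->
        nrm (u n - l) < e).

Definition converges_to (u : nat -> A) (l : A) : Prop :=
  forall e : R, 0 < e -> exists N, forall n, (N <= n)%N -> nrm (u n - l) < e.

Definition norm_continuous (f : A -> A) : Prop :=
  forall a (e : R), 0 < e -> exists2 d : R, 0 < d &
    forall b, nrm (b - a) < d -> nrm (f b - f a) < e.

Definition is_linear_map (f : A -> A) : Prop :=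
  forall (c : C) a b, f (c *: a + b) = c *: f a + f b.

Definition positive_elt (a : A) : Prop := exists b, a = star b * b.

Definition positive_map (f : A -> A) : Prop :=
  is_linear_map f /\ forall a, positive_elt a -> positive_elt (f a).

(* *-endomorphism (not required to be unital) *)
Definition star_endomorphism (f : A -> A) : Prop :=
  [/\ is_linear_map f,
      (forall a b, f (a * b) = f a * f b) &
      (forall a, f (star a) = star (f a))].

Definition transfer_operator (delta dstar : A -> A) : Prop :=
  [/\ norm_continuous dstar, positive_map dstar &
      forall a b, dstar (delta a * b) = a * dstar b].

Definition complete_transfer_operator (delta dstar : A -> A) : Prop :=
  transfer_operator delta dstar /\
  forall a, delta (dstar a) = delta 1 * a * delta 1.

Definition central (z : A) : Prop := forall x, z * x = x * z.

Definition closed_ideal (I : A -> Prop) : Prop :=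
  I 0 /\
  (forall a b, I a -> I b -> I (a + b)) /\
  (forall (c : C) a, I a -> I (c *: a)) /\
  (forall a x, I a -> I (x * a) /\ I (a * x)) /\
  (forall u l, (forall n, I (u n)) -> converges_to u l -> I l).

Definition partial_automorphism (theta : A -> A) (I J : A -> Prop) : Prop :=
  closed_ideal I /\ closed_ideal J /\
  (forall a, I a -> J (theta a)) /\
  (forall (c : C) a b, I a -> I b -> theta (c *: a + b) = c *: theta a + theta b) /\
  (forall a b, I a -> I b -> theta (a * b) = theta a * theta b) /\
  (forall a, I a -> theta (star a) = star (theta a)) /\
  (forall a b, I a -> I b -> theta a = theta b -> a = b) /\
  (forall b, J b -> exists2 a, I a & theta a = b).

Definition left_mul_set (z : A) : A -> Prop := fun x => exists a, x = z * a.

End Cstar.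

(* Main.v *)
Require Import Defs.
From HB Require Import structures.
From mathcomp Require Import all_boot all_order all_algebra.
From mathcomp Require Import reals complex.
Import Order.TTheory GRing.Theory Num.Theory.
Local Open Scope ring_scope.

Lemma ideal_lemma (R : realType) (A : algType R[i]) (star : A -> A) (nrm : A -> R) (z : A) :
  is_unital_Cstar_algebra star nrm -> central z -> z * z = z ->
  closed_ideal nrm (left_mul_set z).
Proof.
move=> [_ [_ [_ [_ [Hn0 [Hnz [_ [_ [Hnm _]]]]]]]]] Hc Hzz.
split; first by exists 0; rewrite mulr0.
split; first by move=> a b [x ->] [y ->]; exists (x + y); rewrite mulrDr.
split; first by move=> c a [x ->]; exists (c *: x); rewrite scalerAr.
split. move=> a x [y ->]; split. by exists (x * y); rewrite !mulrA Hc. by exists (y * x); rewrite mulrA.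
move=> u l Hu Hcv; exists l.
set d := l - z * l.
suff : nrm d = 0 by move/Hnz/eqP; rewrite subr_eq0 => /eqP.
apply/eqP; rewrite eq_le Hn0 andbT; rewrite leNgt; apply/negP => Hd.
set K := nrm (z - 1) + 1.
have HK : 0 < K by rewrite /K ltr_pwDr // Hn0.
have He : 0 < nrm d / K by rewrite divr_gt0.
have [N HN] := Hcv _ He.
have := HN N (leqnn N).
have [a Ea] := Hu N.
have zu : z * u N = u N by rewrite Ea mulrA Hzz.
have E : (z - 1) * (u N - l) = d.
  by rewrite mulrBl mulrBr zu mul1r /d opprB addrC addrA subrK.
move=> Hlt.
have h1 : nrm d <= nrm (z - 1) * nrm (u N - l) by rewrite -E Hnm.
have h2 : nrm (z - 1) * nrm (u N - l) <= nrm (z - 1) * (nrm d / K).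
  by rewrite ler_wpM2l // ltW.
have h3 : nrm (z - 1) * (nrm d / K) < K * (nrm d / K).
  by rewrite ltr_pM2r // /K ltrDl.
have h4 : K * (nrm d / K) = nrm d by rewrite mulrC divfK // gt_eqF.
have := le_lt_trans (le_trans h1 h2) h3.
by rewrite h4 ltxx.
Qed.

Theorem proposition6 (R : realType) (A : algType R[i])
    (star : A -> A) (nrm : A -> R) (delta dstar : A -> A) :
  is_unital_Cstar_algebra star nrm ->
  star_endomorphism star delta ->
  complete_transfer_operator star nrm delta dstar ->
  central (delta 1) ->
  (partial_automorphism star nrm delta
      (left_mul_set (dstar 1)) (left_mul_set (delta 1)) /\
   partial_automorphism star nrm dstar
      (left_mul_set (delta 1)) (left_mul_set (dstar 1)) /\
   (forall a, left_mul_set (dstar 1) a -> dstar (delta a) = a) /\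
   (forall b, left_mul_set (delta 1) b -> delta (dstar b) = b)) /\
  star_endomorphism star dstar.
Proof.
move=> HC Hd Hto Hcq.
have HC' := HC.
move: HC' => [Hss [Hsadd [Hsscal [Hsmul _]]]].
case: Hd => dlin dmul dst.
move: Hto => [[_ [dslin dspos] Htr] Hcomp].
set q := delta 1. set p := dstar 1.
have star1 : star 1 = 1.
  have e : star (star 1 * 1) = star 1 * star (star 1) by rewrite Hsmul.
  by move: e; rewrite Hss !mulr1 Hss => e; rewrite -e.
have qq : q * q = q by rewrite /q -dmul mulr1.
have Hdsq : forall x, dstar (q * x) = dstar x by move=> x; rewrite Htr mul1r.
have dsd : forall a, dstar (delta a) = a * p by move=> a; rewrite -[delta a]mulr1 Htr.
have ddsq : forall a, delta (dstar a) = q * a.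
  by move=> a; rewrite Hcomp -/q -mulrA -Hcq mulrA qq.
have dp : delta p = q by rewrite /p ddsq mulr1.
have dpa : forall a, delta (p * a) = delta a by move=> a; rewrite dmul dp /q -dmul mul1r.
have pap : forall a, p * a * p = a * p by move=> a; rewrite -dsd dpa dsd.
have sp : star p = p.
  have [b Hb] : positive_elt star p.
    apply: dspos; exists 1; by rewrite star1 mulr1.
  by rewrite Hb Hsmul Hss.
have pc : central p.
  move=> b.
  have e := pap (star b).
  have e2 : star (p * star b * p) = star (star b * p) by rewrite e.
  move: e2; rewrite !Hsmul sp Hss => e2.
  by rewrite -e2 mulrA pap.
have pp : p * p = p by have := pap 1; rewrite mulr1 mul1r.
have dsp : forall b, p * dstar b = dstar b by move=> b; rewrite -Htr dp Hdsq.
have dq : forall a, q * delta a = delta a by move=> a; rewrite /q -dmul mul1r.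
have inp : forall a, left_mul_set p a -> p * a = a by move=> a [x ->]; rewrite mulrA pp.
have inq : forall a, left_mul_set q a -> q * a = a by move=> a [x ->]; rewrite mulrA qq.
have dds : forall a, left_mul_set p a -> dstar (delta a) = a.
  by move=> a Ha; rewrite dsd -pc inp.
have ddq : forall b, left_mul_set q b -> delta (dstar b) = b.
  by move=> b Hb; rewrite ddsq inq.
have sx : forall x, star (dstar x) * p = star (dstar x).
  by move=> x; rewrite -{1}sp -Hsmul dsp.
have Ip := @ideal_lemma _ _ _ _ _ HC pc pp.
have Iq := @ideal_lemma _ _ _ _ _ HC Hcq qq.
split; [split; [|split; [|split]] | ].
- do 2 (split; first done).
  split; first by move=> a _; exists (delta a); rewrite dq.
  split; first by move=> c a b _ _; apply: dlin.
  split; first by move=> a b _ _; apply: dmul.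
  split; first by move=> a _; apply: dst.
  split; first by move=> a b Ha Hb E; rewrite -(dds a Ha) -(dds b Hb) E.
  move=> b Hb; exists (dstar b); last exact: ddq.
  by exists (dstar b); rewrite dsp.
- do 2 (split; first done).
  split; first by move=> a _; exists (dstar a); rewrite dsp.
  split; first by move=> c a b _ _; apply: dslin.
  split; first by move=> a b Ha _; rewrite -{1}(ddq a Ha) Htr.
  split; first by move=> a Ha; rewrite -{1}(ddq a Ha) -dst dsd sx.
  split; first by move=> a b Ha Hb E; rewrite -(ddq a Ha) -(ddq b Hb) E.
  move=> b Hb; exists (delta b); last exact: dds.
  by exists (delta b); rewrite dq.
- exact: dds.
- exact: ddq.
- split.
  + exact: dslin.
  + by move=> a b; rewrite -Hdsq mulrA -ddsq Htr.
  + move=> a.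
    have sq : star q = q by rewrite /q -dst star1.
    by rewrite -Hdsq -{1}sq -Hsmul -(Hcq a) -ddsq -dst dsd sx.
Qed.
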